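(* For every precubical set $X$, the stream realization $\vec{|X|}$ is vortex-free, i.e. every point $x\in\vec{|X|}$ has an open neighborhood $V$ for which the preorder $\leqslant_V$ is antisymmetric.
   Context: A circulation on a topological space $X$ is a function assigning to each open $V\subset X$ a preorder $\leqslant_V$ on $V$ such that for every collection $\mathcal{O}$ of open subsets, $\leqslant_{\bigcup\mathcal{O}}$ is the preorder on $\bigcup\mathcal{O}$ with smallest graph containing $\bigcup_{V\in\mathcal{O}}\mathrm{graph}(\leqslant_V)$. A stream is a space with a circulation; a stream map $f:X\to Y$ is a continuous map with $f(x)\leqslant_V f(y)$ whenever $x\leqslant_{f^{-1}V}y$, for every open $V\subset Y$. The category of streams is cocomplete, colimits being computed on underlying spaces with the final circulation. A vortex of a stream is a point $x$ such that $\leqslant_V$ fails to be antisymmetric for every open neighborhood $V$ of $x$; a stream is vortex-free if it has no vortices. Precubical sets: let $\square$ be the smallest subcategory of posets and monotone maps closed under cartesian products (unit $[0]=\{0\}$) containing $\delta_-,\delta_+:[0]\to[1]=\{0<1\}$ (sending $0$ to $0$, resp. $1$); its objects are the $[1]^n$. A precubical set is a functor $X:\square^{op}\to\mathbf{Set}$, $X_n=X([1]^n)$. Let $\vec\square[1]$ be $[0,1]$ with circulation $x\leqslant_V y$ iff $x\le y$ and $[x,y]\subset V$, and $\vec\square[n]$ its $n$-fold product in streams; $\square$-morphisms extend linearly to stream maps between these. The stream realization is the coend $\vec{|X|}=\int^{[1]^n\in\square}X_n\cdot\vec\square[n]$ in streams, with underlying space the geometric realization $|X|$. *)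

(* Defs.v *)
From Stdlib Require Import Reals Lra List.
Import ListNotations.
Open Scope R_scope.

Record stream := Stream {
  pt : Type;
  open : (pt -> Prop) -> Prop;
  circ : (pt -> Prop) -> pt -> pt -> Prop  (* circ V x y  means  x <=_V y *)
}.

Definition Union {T : Type} (O : (T -> Prop) -> Prop) : T -> Prop :=
  fun x => exists V, O V /\ V x.

Definition is_topology (X : stream) : Prop :=
  open X (fun _ => True) /\
  (forall O : (pt X -> Prop) -> Prop,
      (forall V, O V -> open X V) -> open X (Union O)) /\
  (forall U V, open X U -> open X V -> open X (fun x => U x /\ V x)).

Definition preorder_on {T : Type} (V : T -> Prop) (R : T -> T -> Prop) : Prop :=
  (forall x y, R x y -> V x /\ V y) /\
  (forall x, V x -> R x x) /\
  (forall x y z, R x y -> R y z -> R x z).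

Definition is_circulation (X : stream) : Prop :=
  (forall V, open X V -> preorder_on V (circ X V)) /\
  (forall O : (pt X -> Prop) -> Prop,
     (forall V, O V -> open X V) ->
     forall x y,
       circ X (Union O) x y <->
       (forall R : pt X -> pt X -> Prop,
          preorder_on (Union O) R ->
          (forall V a b, O V -> circ X V a b -> R a b) ->
          R x y)).

Definition is_stream (X : stream) : Prop := is_topology X /\ is_circulation X.

Definition stream_map (X Y : stream) (f : pt X -> pt Y) : Prop :=
  (forall V, open Y V -> open X (fun x => V (f x))) /\
  (forall V, open Y V -> forall x y,
      circ X (fun z => V (f z)) x y -> circ Y V (f x) (f y)).

Definition antisymmetric_on {T : Type} (R : T -> T -> Prop) : Prop :=
  forall a b, R a b -> R b a -> a = b.

Definition vortex (X : stream) (x : pt X) : Prop :=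
  forall V, open X V -> V x -> ~ antisymmetric_on (circ X V).

Definition vortex_free (X : stream) : Prop := forall x, ~ vortex X x.

Definition I1pt : Type := { t : R | 0 <= t <= 1 }.

Definition I1 : stream := {|
  pt := I1pt;
  open := fun U => forall x : I1pt, U x -> exists eps, eps > 0 /\
            forall y : I1pt, Rabs (proj1_sig y - proj1_sig x) < eps -> U y;
  circ := fun V x y => proj1_sig x <= proj1_sig y /\
            forall z : I1pt, proj1_sig x <= proj1_sig z <= proj1_sig y -> V z
|}.

Lemma I1_0_ok : 0 <= 0 <= 1. Proof. lra. Qed.
Lemma I1_1_ok : 0 <= 1 <= 1. Proof. lra. Qed.

Definition I1const (b : bool) : pt I1 :=
  if b then exist _ 1 I1_1_ok else exist _ 0 I1_0_ok.

(* The precubical site.  A morphism [1]^m -> [1]^n of the category    *)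
(* square (generated under cartesian products and composition by      *)
(* delta_-, delta_+ : [0] -> [1] and identities) is a product of      *)
(* n factors, each id_[1] (None) or delta_b (Some b); it is encoded   *)
(* by the word of these factors: length n, with m occurrences of None.*)

Fixpoint countId (w : list (option bool)) : nat :=
  match w with
  | [] => 0%nat
  | None :: w' => S (countId w')
  | Some _ :: w' => countId w'
  end.

(* word of g o f, for g given by w and f given by u *)
Fixpoint subst (w u : list (option bool)) : list (option bool) :=
  match w with
  | [] => []
  | None :: w' =>
      match u with
      | [] => None :: subst w' []
      | a :: u' => a :: subst w' u'
      end
  | Some b :: w' => Some b :: subst w' u
  end.

Lemma subst_length w u : length (subst w u) = length w.
Proof.
  revert u; induction w as [|[b|] w IH]; intros u; simpl; auto.
  destruct u; simpl; auto.
Qed.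

Lemma subst_ids w u : countId w = length u -> countId (subst w u) = countId u.
Proof.
  revert u; induction w as [|[b|] w IH]; intros u H; simpl in *.
  - destruct u; simpl in *; congruence.
  - apply IH; auto.
  - destruct u as [|[a|] u]; simpl in *; try discriminate.
    + apply IH; congruence.
    + f_equal; apply IH; congruence.
Qed.

Lemma repeat_ids n : countId (repeat None n) = n.
Proof. induction n; simpl; auto. Qed.

Record cmor (m n : nat) := CMor {
  cword : list (option bool);
  clen : length cword = n;
  cids : countId cword = m
}.
Arguments cword {m n}.
Arguments clen {m n}.
Arguments cids {m n}.

Definition cid (n : nat) : cmor n n :=
  CMor n n (repeat None n) (repeat_length None n) (repeat_ids n).

Lemma ccomp_ids {k m n} (f : cmor k m) (g : cmor m n) :
  countId (subst (cword g) (cword f)) = k.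
Proof.
  rewrite subst_ids. apply (cids f).
  rewrite (cids g), (clen f). reflexivity.
Qed.

Definition ccomp {k m n} (f : cmor k m) (g : cmor m n) : cmor k n :=
  CMor k n (subst (cword g) (cword f))
    (eq_trans (subst_length _ _) (clen g)) (ccomp_ids f g).

Record precubical := Precubical {
  cell : nat -> Type;
  act : forall m n, cmor m n -> cell n -> cell m;
  act_id : forall n x, act n n (cid n) x = x;
  act_comp : forall k m n (f : cmor k m) (g : cmor m n) (x : cell n),
      act k n (ccomp f g) x = act k m f (act m n g x)
}.

Definition is_cube_product (P : nat -> stream)
  (proj : forall n, nat -> pt (P n) -> pt I1) : Prop :=
  forall n,
    is_stream (P n) /\
    (forall j, (j < n)%nat -> stream_map (P n) I1 (proj n j)) /\
    (forall Z : stream, is_stream Z ->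
       forall g : nat -> pt Z -> pt I1,
         (forall j, (j < n)%nat -> stream_map Z I1 (g j)) ->
         (exists h, stream_map Z (P n) h /\
              forall j z, (j < n)%nat -> proj n j (h z) = g j z) /\
         (forall h h', stream_map Z (P n) h -> stream_map Z (P n) h' ->
              (forall j z, (j < n)%nat -> proj n j (h z) = g j z) ->
              (forall j z, (j < n)%nat -> proj n j (h' z) = g j z) ->
              forall z, h z = h' z)).

(* The linear extension of a square-morphism f : [1]^m -> [1]^n:
   coordinate j of the image is the next free coordinate (for id) or
   the constant b (for delta_b). *)
Definition linear_maps (P : nat -> stream)
  (proj : forall n, nat -> pt (P n) -> pt I1)
  (Pmap : forall m n, cmor m n -> pt (P m) -> pt (P n)) : Prop :=
  forall m n (f : cmor m n) (t : pt (P m)) j, (j < n)%nat ->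
    proj n j (Pmap m n f t) =
    match nth j (cword f) (Some false) with
    | None => proj m (countId (firstn j (cword f))) t
    | Some b => I1const b
    end.

(* S with the maps iota n x : vec-square[n] -> S (x in X_n) is the
   coend  int^{[1]^n} X_n . vec-square[n]  in the category of streams. *)
Definition is_coend (X : precubical) (P : nat -> stream)
  (Pmap : forall m n, cmor m n -> pt (P m) -> pt (P n))
  (S : stream) (iota : forall n, cell X n -> pt (P n) -> pt S) : Prop :=
  is_stream S /\
  (forall n x, stream_map (P n) S (iota n x)) /\
  (forall m n (f : cmor m n) (x : cell X n) (t : pt (P m)),
      iota n x (Pmap m n f t) = iota m (act X m n f x) t) /\
  (forall Z : stream, is_stream Z ->
     forall j : forall n, cell X n -> pt (P n) -> pt Z,
       (forall n x, stream_map (P n) Z (j n x)) ->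
       (forall m n (f : cmor m n) (x : cell X n) (t : pt (P m)),
           j n x (Pmap m n f t) = j m (act X m n f x) t) ->
       (exists u, stream_map S Z u /\
            forall n x t, u (iota n x t) = j n x t) /\
       (forall u u', stream_map S Z u -> stream_map S Z u' ->
            (forall n x t, u (iota n x t) = j n x t) ->
            (forall n x t, u' (iota n x t) = j n x t) ->
            forall s, u s = u' s)).

(* Main.v *)
Require Import Defs.
From Stdlib Require Import Reals List.
From Stdlib Require Import Lra Lia Classical FunctionalExtensionality PropExtensionality ProofIrrelevance.
Import ListNotations.
Open Scope R_scope.

Lemma pred_ext {T : Type} (U W : T -> Prop) : (forall x, U x <-> W x) -> U = W.
Proof. intro H; apply functional_extensionality; intro; apply propositional_extensionality; auto. Qed.

Lemma open_ext (X : stream) (U W : pt X -> Prop) :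
  (forall x, U x <-> W x) -> open X U -> open X W.
Proof. intros H HU. rewrite <- (pred_ext U W H). exact HU. Qed.

Lemma open_full (X : stream) : is_topology X -> open X (fun _ => True).
Proof. intros [H _]; exact H. Qed.

Lemma open_empty (X : stream) : is_topology X -> open X (fun _ => False).
Proof.
  intros [_ [H _]].
  apply (open_ext X (Union (fun _ => False))).
  - intro x; unfold Union; split; [intros [V [[] _]] | tauto].
  - apply H; intros V [].
Qed.

Lemma circ_mono (X : stream) : is_stream X -> forall U W, open X U -> open X W ->
  (forall z, U z -> W z) -> forall x y, circ X U x y -> circ X W x y.
Proof.
  intros [HT [HC1 HC2]] U W HU HW Hsub x y Hxy.
  set (O := fun V : pt X -> Prop => V = U \/ V = W).
  assert (HO : forall V, O V -> open X V) by (intros V [-> | ->]; auto).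
  assert (E : Union O = W).
  { apply pred_ext; intro z; unfold Union, O; split.
    - intros [V [[-> | ->] HV]]; auto.
    - intro Hz; exists W; auto. }
  rewrite <- E. apply (proj2 (HC2 O HO x y)).
  intros R _ HR. apply (HR U); unfold O; auto.
Qed.

Lemma I1_eq (a b : pt I1) : proj1_sig a = proj1_sig b -> a = b.
Proof.
  destruct a as [a Ha], b as [b Hb]; simpl; intro E; subst.
  f_equal; apply proof_irrelevance.
Qed.

Lemma const_open (X : stream) (P0 : Prop) : is_topology X -> open X (fun _ => P0).
Proof.
  intro HT. destruct (classic P0) as [Hc|Hc].
  - apply (open_ext X (fun _ => True)); [intros; tauto | apply open_full; auto].
  - apply (open_ext X (fun _ => False)); [intros; tauto | apply open_empty; auto].
Qed.

Lemma const_map (X Y : stream) (c : pt Y) : is_stream X -> is_stream Y ->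
  stream_map X Y (fun _ => c).
Proof.
  intros [HTX HCX] [HTY [HCY _]].
  split.
  - intros W _; apply const_open; auto.
  - intros W HW x y Hxy. destruct (proj1 HCX _ (const_open X (W c) HTX)) as [Hm _].
    destruct (Hm _ _ Hxy) as [Hx _]. destruct (HCY W HW) as [_ [Hr _]]. apply Hr; exact Hx.
Qed.

Lemma I1_const_map (X : stream) (c : pt I1) : is_stream X -> stream_map X I1 (fun _ => c).
Proof.
  intros [HTX HCX].
  split.
  - intros W _; apply const_open; auto.
  - intros W HW x y Hxy. destruct (proj1 HCX _ (const_open X (W c) HTX)) as [Hm _].
    destruct (Hm _ _ Hxy) as [Hx _]. simpl. split; [lra|].
    intros z Hz. replace z with c; auto. apply I1_eq; lra.
Qed.

Lemma sep (P : nat -> stream) (proj : forall n, nat -> pt (P n) -> pt I1)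
  (HP : is_cube_product P proj) m (a b : pt (P m)) :
  (forall j, (j < m)%nat -> proj1_sig (proj m j a) = proj1_sig (proj m j b)) -> a = b.
Proof.
  intro H. destruct (HP m) as [HS [Hpr Hu]].
  destruct (Hu (P m) HS (fun j _ => proj m j a) (fun j _ => I1_const_map _ _ HS)) as [_ Hu'].
  apply (Hu' (fun _ => a) (fun _ => b) (const_map _ _ a HS HS) (const_map _ _ b HS HS)); auto.
  intros j z Hj; apply I1_eq; symmetry; auto.
Qed.

Definition Zc (T : Type) (W0 : T -> Prop) : stream := {|
  pt := T;
  open := fun W => (forall z, W z) \/ (forall z, ~ W z) \/ (forall z, W z <-> W0 z);
  circ := fun W a b => W a /\ W b |}.

Lemma Zc_stream T W0 : is_stream (Zc T W0).
Proof.
  split; [split; [|split]|split].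
  - simpl; left; auto.
  - intros O HO. simpl.
    destruct (classic (exists V, O V /\ forall z, V z)) as [[V [HV Hf]]|Hnf].
    + left; intro z; exists V; auto.
    + destruct (classic (exists V, O V /\ forall z, V z <-> W0 z)) as [[V [HV Hf]]|Hnw].
      * right; right; intro z; split.
        -- intros [V' [HV' Hz]]. destruct (HO V' HV') as [H|[H|H]].
           ++ exfalso; apply Hnf; exists V'; auto.
           ++ exfalso; apply (H z Hz).
           ++ apply H; auto.
        -- intro Hz; exists V; split; auto; apply Hf; auto.
      * right; left; intros z [V' [HV' Hz]]. destruct (HO V' HV') as [H|[H|H]].
        -- apply Hnf; exists V'; auto.
        -- apply (H z Hz).
        -- apply Hnw; exists V'; auto.
  - intros U V HU HV; simpl in *.
    destruct HU as [HU|[HU|HU]]; destruct HV as [HV|[HV|HV]];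
      first [ left; intro z; firstorder fail
            | right; left; intro z; firstorder fail
            | right; right; intro z; firstorder fail ].
  - intros V _. split; [simpl; tauto|]. split; simpl; tauto.
  - intros O HO x y. simpl. split.
    + intros [[V1 [H1 Hx]] [V2 [H2 Hy]]] R _ HR.
      destruct (HO V1 H1) as [K1|[K1|K1]].
      * apply (HR V1); simpl; auto.
      * exfalso; apply (K1 x Hx).
      * destruct (HO V2 H2) as [K2|[K2|K2]].
        -- apply (HR V2); simpl; auto.
        -- exfalso; apply (K2 y Hy).
        -- apply (HR V1); [exact H1|]. simpl; split; [exact Hx|]. apply (proj2 (K1 y)); apply (proj1 (K2 y)); exact Hy.
    + intro H. apply (H (fun a b => Union O a /\ Union O b)).
      * split; [tauto|]. split; tauto.
      * intros V a b HV [Ha Hb]; split; exists V; auto.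
Qed.

Lemma Zc_map (X : stream) T W0 (f : pt X -> T) : is_stream X ->
  open X (fun x => W0 (f x)) -> stream_map X (Zc T W0) f.
Proof.
  intros [HT HC] H0.
  assert (Hop : forall W, open (Zc T W0) W -> open X (fun x => W (f x))).
  { intros W [HW|[HW|HW]].
    - apply (open_ext X (fun _ => True)); [intro; split; auto | apply open_full; auto].
    - apply (open_ext X (fun _ => False)); [intro x; split; [tauto | apply HW] | apply open_empty; auto].
    - apply (open_ext X (fun x => W0 (f x))); [intro x; apply iff_sym, HW | exact H0]. }
  split; auto.
  intros W HW x y Hxy. destruct (proj1 HC _ (Hop W HW)) as [Hm _]. exact (Hm _ _ Hxy).
Qed.

Lemma surj X P proj Pmap S iota (HP : is_cube_product P proj)
  (HC : is_coend X P Pmap S iota) : forall s : pt S, exists n c t, iota n c t = s.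
Proof.
  intro s. destruct HC as [HS [Hio [Hcomp Hu]]].
  set (Z := Zc Prop (fun _ => False)).
  assert (Hm : forall (Y : stream) (f : pt Y -> Prop), is_stream Y -> stream_map Y Z f).
  { intros Y f HY. apply Zc_map; auto. exact (open_empty _ (proj1 HY)). }
  destruct (Hu Z (Zc_stream _ _) (fun n c t => True) (fun n c => Hm _ _ (proj1 (HP n)))
              (fun m n f x t => eq_refl)) as [_ Huniq].
  assert (H2 : forall n x t, (exists n' c' t', iota n' c' t' = iota n x t) = True).
  { intros; apply propositional_extensionality; split; [auto | intros _; eauto]. }
  pose proof (Huniq (fun _ => True) (fun s => exists n c t, iota n c t = s)
                (Hm _ _ HS) (Hm _ _ HS) (fun _ _ _ => eq_refl) H2 s) as Es.
  rewrite <- Es; exact I.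
Qed.

(* The final circulation is bounded by chains of cube steps *)
Definition Bst (X : precubical) (P : nat -> stream) (S : stream)
  (iota : forall n, cell X n -> pt (P n) -> pt S) (W : pt S -> Prop) (a b : pt S) : Prop :=
  exists m (d : cell X m) (s1 s2 : pt (P m)), a = iota m d s1 /\ b = iota m d s2 /\
    circ (P m) (fun z => W (iota m d z)) s1 s2.

Definition Cst (X : precubical) (P : nat -> stream) (S : stream)
  (iota : forall n, cell X n -> pt (P n) -> pt S) (W : pt S -> Prop) (p q : pt S) : Prop :=
  W p /\ W q /\ forall R : pt S -> pt S -> Prop, (forall z, W z -> R z z) ->
    (forall a b c, R a b -> R b c -> R a c) -> (forall a b, Bst X P S iota W a b -> R a b) -> R p q.

Definition ZC X P S iota : stream := {| pt := pt S; open := open S; circ := Cst X P S iota |}.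

Lemma Cst_pre X P S iota W : preorder_on W (Cst X P S iota W).
Proof.
  split; [intros x y [Hx [Hy _]]; auto|]. split.
  - intros x Hx. split; [auto | split; [auto|]]. intros R Hr _ _. auto.
  - intros x y z [Hx [_ Hxy]] [_ [Hz Hyz]]. split; [auto | split; [auto|]].
    intros R Hr Ht Hb. apply (Ht x y z); [apply Hxy | apply Hyz]; auto.
Qed.

Lemma ZC_stream X P proj Pmap S iota (HP : is_cube_product P proj)
  (HC : is_coend X P Pmap S iota) : is_stream (ZC X P S iota).
Proof.
  destruct HC as [[HTS HCS] [Hio _]].
  split; [exact HTS|]. split.
  - intros V _; exact (Cst_pre X P S iota V).
  - intros O HO x y. split.
    + intros [Hx [Hy Hxy]] R [HRm [HRr HRt]] HR. apply Hxy; [exact HRr | exact HRt |].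
      intros a b [m [d [s1 [s2 [-> [-> Hs]]]]]].
      destruct (HP m) as [[HTm HCm] _].
      set (O' := fun U : pt (P m) -> Prop => exists V, O V /\ U = (fun z => V (iota m d z))).
      assert (HO' : forall U, O' U -> open (P m) U).
      { intros U [V [HV ->]]. apply (proj1 (Hio m d)); apply HO; auto. }
      assert (E : (fun z => Union O (iota m d z)) = Union O').
      { apply pred_ext; intro z; split.
        - intros [V [HV Hz]]. exists (fun z => V (iota m d z)); split; [exists V; auto | auto].
        - intros [U [[V [HV ->]] Hz]]. exists V; auto. }
      rewrite E in Hs.
      cut (Union O' s1 /\ Union O' s2 /\ R (iota m d s1) (iota m d s2)); [tauto|].
      refine (proj1 (proj2 HCm O' HO' s1 s2) Hs
                (fun s t => Union O' s /\ Union O' t /\ R (iota m d s) (iota m d t)) _ _).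
      * split; [tauto|]. split.
        -- intros s Hs'. split; [auto | split; [auto|]]. apply HRr.
           rewrite <- E in Hs'. exact Hs'.
        -- intros a b c [Ha [_ Hab]] [_ [Hc Hbc]]. split; [auto | split; [auto | eapply HRt; eauto]].
      * intros U a b [V [HV ->]] Hab.
        destruct (proj1 HCm _ (HO' _ (ex_intro _ V (conj HV eq_refl)))) as [Hm _].
        destruct (Hm _ _ Hab) as [Ha Hb].
        split; [exists (fun z => V (iota m d z)); split; [exists V; auto | auto]|].
        split; [exists (fun z => V (iota m d z)); split; [exists V; auto | auto]|].
        apply (HR V); auto. split; [auto | split; [auto|]]. intros R'' _ _ HB. apply HB.
        exists m, d, a, b. auto.
    + intro H. apply (H (Cst X P S iota (Union O))).
      * exact (Cst_pre X P S iota (Union O)).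
      * intros V a b HV [Ha [Hb Hab]]. split; [exists V; auto | split; [exists V; auto|]].
        intros R Hr Ht HB. apply Hab.
        -- intros z Hz. apply Hr. exists V; auto.
        -- exact Ht.
        -- intros a' b' [m [d [s1 [s2 [-> [-> Hs]]]]]]. apply HB. exists m, d, s1, s2.
           split; [auto | split; [auto|]].
           destruct (HP m) as [HSm _].
           apply (circ_mono (P m) HSm (fun z => V (iota m d z))); auto.
           ++ apply (proj1 (Hio m d)). apply HO; auto.
           ++ apply (proj1 (Hio m d)). destruct HTS as [_ [HU _]]. apply HU; auto.
           ++ intros z Hz; exists V; auto.
Qed.

Lemma circ_S_C X P proj Pmap S iota (HP : is_cube_product P proj)
  (HC : is_coend X P Pmap S iota) :
  forall V, open S V -> forall a b, circ S V a b -> Cst X P S iota V a b.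
Proof.
  intros V HV a b Hab.
  pose proof (surj X P proj Pmap S iota HP HC) as Hsurj.
  pose proof (ZC_stream X P proj Pmap S iota HP HC) as HZ.
  destruct HC as [HS [Hio [Hcomp Hu]]].
  destruct (Hu (ZC X P S iota) HZ iota) as [[u [Hum Hueq]] _].
  - intros n c. split; [apply (proj1 (Hio n c))|].
    intros W HW s t Hst.
    destruct (HP n) as [[HTn HCn] _].
    destruct (proj1 HCn _ (proj1 (Hio n c) W HW)) as [Hm _].
    destruct (Hm _ _ Hst) as [Hs Ht].
    split; [exact Hs | split; [exact Ht|]].
    intros R _ _ HB. apply HB. exists n, c, s, t. auto.
  - exact Hcomp.
  - assert (Hid : forall s, u s = s).
    { intro s. destruct (Hsurj s) as [n [c [t <-]]]. apply Hueq. }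
    assert (E : (fun z => V (u z)) = V) by (apply functional_extensionality; intro; rewrite Hid; auto).
    pose proof (proj2 Hum V HV a b) as K. rewrite E in K. rewrite !Hid in K. exact (K Hab).
Qed.

Definition sumF (m : nat) (F : nat -> R) : R := fold_right Rplus 0 (map F (seq 0 m)).

Lemma sumF_S m F : sumF (S m) F = F 0%nat + sumF m (fun j => F (S j)).
Proof. unfold sumF. simpl. f_equal. rewrite <- seq_shift, map_map. reflexivity. Qed.

Lemma sumF_ext m F G : (forall j, (j < m)%nat -> F j = G j) -> sumF m F = sumF m G.
Proof.
  revert F G; induction m; intros F G H; [reflexivity|]. rewrite !sumF_S.
  f_equal; [apply H; lia | apply IHm; intros; apply H; lia].
Qed.

Lemma sumF_n a b F : a = b -> sumF a F = sumF b F.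
Proof. intros ->; reflexivity. Qed.

Lemma sumF_zero m : sumF m (fun _ => 0) = 0.
Proof. induction m; [reflexivity|]. rewrite sumF_S, IHm. lra. Qed.

Lemma sumF_word (w : list (option bool)) (G : nat -> R) :
  sumF (length w) (fun j => match nth j w (Some false) with
                            | None => G (countId (firstn j w)) | Some _ => 0 end)
  = sumF (countId w) G.
Proof.
  revert G; induction w as [|a w IH]; intro G; [reflexivity|].
  simpl length. rewrite sumF_S.
  destruct a as [b|].
  - simpl. rewrite Rplus_0_l. apply IH.
  - simpl. rewrite sumF_S. f_equal. apply (IH (fun k => G (S k))).
Qed.

Lemma sumF_le_eq m F G : (forall j, (j < m)%nat -> F j <= G j) ->
  sumF m F <= sumF m G /\ (sumF m F = sumF m G -> forall j, (j < m)%nat -> F j = G j).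
Proof.
  revert F G; induction m; intros F G H.
  - split; [unfold sumF; simpl; lra | intros; lia].
  - rewrite !sumF_S.
    destruct (IHm (fun j => F (S j)) (fun j => G (S j))) as [H1 H2]; [intros; apply H; lia|].
    assert (H0 := H 0%nat ltac:(lia)).
    split; [lra|]. intros E j Hj. destruct j.
    + lra.
    + assert (E' : sumF m (fun j => F (S j)) = sumF m (fun j => G (S j))) by lra.
      apply (H2 E' j); lia.
Qed.

Lemma sum_compat P proj Pmap (HL : linear_maps P proj Pmap) (F : R -> R)
  (F0 : F 0 = 0) (F1 : F 1 = 0) m n (f : cmor m n) (t : pt (P m)) :
  sumF n (fun j => F (proj1_sig (proj n j (Pmap m n f t))))
  = sumF m (fun k => F (proj1_sig (proj m k t))).
Proof.
  transitivity (sumF n (fun j => match nth j (cword f) (Some false) with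
      | None => (fun k => F (proj1_sig (proj m k t))) (countId (firstn j (cword f)))
      | Some _ => 0 end)).
  - apply sumF_ext; intros j Hj. rewrite (HL m n f t j Hj).
    destruct (nth j (cword f) (Some false)) as [[|]|]; simpl; auto.
  - rewrite (sumF_n n (length (cword f)) _ (eq_sym (clen f))).
    etransitivity; [exact (sumF_word (cword f) (fun k => F (proj1_sig (proj m k t))))|]. apply sumF_n, cids.
Qed.

Definition hf (θ v : R) : R := if Rlt_dec θ v then v - 1 else v.
Definition gf (θ v : R) : R := if Req_EM_T v θ then 1 else 0.

Definition tau (P : nat -> stream) (proj : forall n, nat -> pt (P n) -> pt I1) θ m
  (t : pt (P m)) : R := sumF m (fun j => hf θ (proj1_sig (proj m j t))).
Definition Phi (P : nat -> stream) (proj : forall n, nat -> pt (P n) -> pt I1) θ m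
  (t : pt (P m)) : Prop := sumF m (fun j => gf θ (proj1_sig (proj m j t))) = 0.

Lemma Phi_iff P proj θ m t : Phi P proj θ m t <->
  forall j, (j < m)%nat -> proj1_sig (proj m j t) <> θ.
Proof.
  unfold Phi. split.
  - intros H j Hj Heq.
    destruct (sumF_le_eq m (fun _ => 0) (fun j => gf θ (proj1_sig (proj m j t)))) as [_ H2].
    { intros; unfold gf; destruct Req_EM_T; lra. }
    assert (E : sumF m (fun _ => 0) = sumF m (fun j => gf θ (proj1_sig (proj m j t))))
      by (rewrite sumF_zero, H; reflexivity).
    specialize (H2 E j Hj). cbv beta in H2. unfold gf in H2.
    destruct (Req_EM_T _ θ); [lra | contradiction].
  - intro H. rewrite (sumF_ext m _ (fun _ => 0)); [apply sumF_zero|].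
    intros j Hj. unfold gf. destruct (Req_EM_T _ θ); [exfalso; apply (H j Hj); auto | auto].
Qed.

Lemma open_fin (X : stream) (HT : is_topology X) k (A : nat -> pt X -> Prop) :
  (forall j, (j < k)%nat -> open X (A j)) -> open X (fun x => forall j, (j < k)%nat -> A j x).
Proof.
  induction k; intro H.
  - apply (open_ext X (fun _ => True)); [intro; split; [intros _ j Hj; lia | auto] | apply open_full; auto].
  - apply (open_ext X (fun x => (fun x => forall j, (j < k)%nat -> A j x) x /\ A k x)).
    + intro x; split.
      * intros [H1 H2] j Hj. destruct (Nat.eq_dec j k); [subst; auto | apply H1; lia].
      * intros H1; split; [intros; apply H1; lia | apply H1; lia].
    + destruct HT as [_ [_ HI]]. apply HI; [apply IHk; intros; apply H; lia | apply H; lia].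
Qed.

Lemma I1_open_neq θ : open I1 (fun z : I1pt => proj1_sig z <> θ).
Proof.
  simpl. intros x Hx. exists (Rabs (proj1_sig x - θ)). split.
  - unfold Rgt. apply Rabs_pos_lt. lra.
  - intros y Hy Heq. rewrite Heq in Hy. rewrite Rabs_minus_sym in Hy. lra.
Qed.

Lemma I1_open_gt θ : open I1 (fun z : I1pt => θ < proj1_sig z).
Proof.
  simpl. intros x Hx. exists (proj1_sig x - θ). split; [lra|].
  intros y Hy. apply Rabs_def2 in Hy. lra.
Qed.

Lemma I1_open_lt θ : open I1 (fun z : I1pt => proj1_sig z < θ).
Proof.
  simpl. intros x Hx. exists (θ - proj1_sig x). split; [lra|].
  intros y Hy. apply Rabs_def2 in Hy. lra.
Qed.

Lemma Phi_open P proj (HP : is_cube_product P proj) θ m : open (P m) (Phi P proj θ m).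
Proof.
  destruct (HP m) as [[HT _] [Hpr _]].
  apply (open_ext (P m) (fun t => forall j, (j < m)%nat ->
           (fun z : I1pt => proj1_sig z <> θ) (proj m j t))).
  - intro t; rewrite Phi_iff; tauto.
  - apply open_fin; auto. intros j Hj. exact (proj1 (Hpr j Hj) (fun z : I1pt => proj1_sig z <> θ) (I1_open_neq θ)).
Qed.

Lemma cube_step P proj (HP : is_cube_product P proj) θ m (s1 s2 : pt (P m)) :
  circ (P m) (Phi P proj θ m) s1 s2 ->
  tau P proj θ m s1 < tau P proj θ m s2 \/ s1 = s2.
Proof.
  intro H.
  destruct (HP m) as [HS [Hpr _]].
  set (Wσ := fun (σ : nat -> bool) (j : nat) =>
         if σ j then (fun z : I1pt => θ < proj1_sig z) else (fun z : I1pt => proj1_sig z < θ)).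
  set (U := fun σ (t : pt (P m)) => forall j, (j < m)%nat -> Wσ σ j (proj m j t)).
  set (O := fun V => exists σ, V = U σ).
  assert (HO : forall V, O V -> open (P m) V).
  { intros V [σ ->]. apply open_fin; [apply HS|]. intros j Hj. apply (proj1 (Hpr j Hj)).
    unfold Wσ; destruct (σ j); [apply I1_open_gt | apply I1_open_lt]. }
  assert (E : Phi P proj θ m = Union O).
  { apply pred_ext; intro t; rewrite Phi_iff; split.
    - intro Ht. exists (U (fun j => if Rlt_dec θ (proj1_sig (proj m j t)) then true else false)).
      split; [eexists; reflexivity|].
      intros j Hj. unfold Wσ. destruct (Rlt_dec θ _); [auto | specialize (Ht j Hj); lra].
    - intros [V [[σ ->] HV]] j Hj. specialize (HV j Hj). unfold Wσ in HV.
      destruct (σ j); cbv beta in HV; lra. }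
  rewrite E in H.
  destruct HS as [HT HC].
  cut (Union O s1 /\ Union O s2 /\ (tau P proj θ m s1 < tau P proj θ m s2 \/ s1 = s2)); [tauto|].
  refine (proj1 (proj2 HC O HO s1 s2) H
     (fun a b => Union O a /\ Union O b /\ (tau P proj θ m a < tau P proj θ m b \/ a = b)) _ _).
  - split; [tauto|]. split; [intros; auto|].
    intros a b c [Ha [Hb Hab]] [_ [Hc Hbc]]. split; [auto | split; [auto|]].
    destruct Hab as [Hab | <-]; destruct Hbc as [Hbc | <-]; [left; lra | left; auto | left; auto | right; auto].
  - intros V a b [σ ->] Hab.
    destruct (proj1 HC _ (HO _ (ex_intro _ σ eq_refl))) as [Hm _].
    destruct (Hm _ _ Hab) as [Ha Hb].
    split; [exists (U σ); split; [exists σ; auto | auto]|].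
    split; [exists (U σ); split; [exists σ; auto | auto]|].
    assert (Hf : circ (P m) (fun _ => True) a b).
    { apply (circ_mono (P m) (conj HT HC) (U σ)); auto.
      - apply HO; exists σ; auto.
      - apply open_full; auto. }
    assert (Hle : forall j, (j < m)%nat -> proj1_sig (proj m j a) <= proj1_sig (proj m j b)).
    { intros j Hj.
      assert (HoT : open I1 (fun _ => True)) by (simpl; intros; exists 1; split; [lra | auto]).
      exact (proj1 (proj2 (Hpr j Hj) (fun _ => True) HoT a b Hf)). }
    assert (Hj2 : forall j, (j < m)%nat ->
      hf θ (proj1_sig (proj m j a)) <= hf θ (proj1_sig (proj m j b)) /\
      (hf θ (proj1_sig (proj m j a)) = hf θ (proj1_sig (proj m j b)) ->
       proj1_sig (proj m j a) = proj1_sig (proj m j b))).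
    { intros j Hj. specialize (Ha j Hj). specialize (Hb j Hj). specialize (Hle j Hj).
      unfold Wσ in Ha, Hb. unfold hf.
      destruct (σ j); cbv beta in Ha, Hb;
        destruct (Rlt_dec θ (proj1_sig (proj m j a))); destruct (Rlt_dec θ (proj1_sig (proj m j b)));
        split; intros; lra. }
    destruct (sumF_le_eq m (fun j => hf θ (proj1_sig (proj m j a)))
                           (fun j => hf θ (proj1_sig (proj m j b)))) as [L1 L2].
    { intros j Hj; apply Hj2; auto. }
    unfold tau. destruct (Rle_lt_or_eq_dec _ _ L1) as [Lt | Eq]; [left; exact Lt | right].
    apply (sep P proj HP). intros j Hj. apply (proj2 (Hj2 j Hj)). exact (L2 Eq j Hj).
Qed.

Lemma theta_exists (L : list R) : forall a b, a < b ->
  exists θ, a < θ < b /\ forall v, In v L -> v <> θ.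
Proof.
  induction L as [|v L IH]; intros a b Hab.
  - exists ((a + b) / 2); split; [lra | intros v []].
  - destruct (Rlt_dec a v) as [H1|H1]; [destruct (Rlt_dec v b) as [H2|H2]|].
    + destruct (IH a v H1) as [θ [Hθ Hn]]. exists θ; split; [lra|].
      intros w [<- | Hw]; [lra | auto].
    + destruct (IH a b Hab) as [θ [Hθ Hn]]. exists θ; split; [lra|].
      intros w [<- | Hw]; [lra | auto].
    + destruct (IH a b Hab) as [θ [Hθ Hn]]. exists θ; split; [lra|].
      intros w [<- | Hw]; [lra | auto].
Qed.

Theorem mainTheorem2
  (X : precubical)
  (P : nat -> stream) (proj : forall n, nat -> pt (P n) -> pt I1)
  (Pmap : forall m n, cmor m n -> pt (P m) -> pt (P n))
  (S : stream) (iota : forall n, cell X n -> pt (P n) -> pt S) :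
  is_cube_product P proj ->
  linear_maps P proj Pmap ->
  is_coend X P Pmap S iota ->
  forall x : pt S, exists V : pt S -> Prop,
    open S V /\ V x /\ antisymmetric_on (circ S V).
Proof.
  intros HP HL HC x.
  destruct (surj X P proj Pmap S iota HP HC x) as [n [c [t0 Hx]]].
  destruct (theta_exists (map (fun j => proj1_sig (proj n j t0)) (seq 0 n)) 0 1 ltac:(lra))
    as [θ [Hθ Hθv]].
  pose proof HC as HC'. destruct HC' as [HS [Hio [Hcomp Hu]]].
  destruct (Hu (Zc Prop (fun p => p)) (Zc_stream _ _) (fun m d t => Phi P proj θ m t))
    as [[uV [HuVm HuV]] _].
  - intros m d. apply Zc_map; [apply (proj1 (HP m)) | apply Phi_open; auto].
  - intros m k f d t. unfold Phi.
    rewrite (sum_compat P proj Pmap HL (gf θ)); [reflexivity | |];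
      unfold gf; destruct Req_EM_T; lra.
  - destruct (Hu (Zc R (fun _ => False)) (Zc_stream _ _) (fun m d t => tau P proj θ m t))
      as [[ut [_ Hut]] _].
    + intros m d. apply Zc_map; [apply (proj1 (HP m)) | apply open_empty, (proj1 (HP m))].
    + intros m k f d t. unfold tau.
      rewrite (sum_compat P proj Pmap HL (hf θ)); [reflexivity | |];
        unfold hf; destruct Rlt_dec; lra.
    + exists uV. split; [|split].
      * exact (proj1 HuVm (fun p : Prop => p) (or_intror (or_intror (fun z => iff_refl z)))).
      * rewrite <- Hx, HuV. apply Phi_iff. intros j Hj. apply Hθv.
        apply (in_map (fun j => proj1_sig (proj n j t0))). apply in_seq; lia.
      * intros a b Hab Hba.
        assert (HV : open S uV) by
          exact (proj1 HuVm (fun p : Prop => p) (or_intror (or_intror (fun z => iff_refl z)))).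
        assert (K : forall p q, Cst X P S iota uV p q ->
                  uV p /\ uV q /\ (ut p < ut q \/ p = q)).
        { intros p q [Hp [Hq Hpq]]. split; [exact Hp | split; [exact Hq|]].
          apply Hpq.
          - intros; right; reflexivity.
          - intros a' b' c' [L|<-] [L'|<-]; [left; lra | left; auto | left; auto | right; auto].
          - intros a' b' [m [d [s1 [s2 [-> [-> Hs]]]]]].
            assert (E : (fun z => uV (iota m d z)) = Phi P proj θ m)
              by (apply functional_extensionality; intro; apply HuV).
            rewrite E in Hs.
            destruct (cube_step P proj HP θ m s1 s2 Hs) as [Lt | Eq].
            + left. rewrite !Hut. exact Lt.
            + right. rewrite Eq. reflexivity. }
        destruct (K a b (circ_S_C X P proj Pmap S iota HP HC uV HV a b Hab)) as [_ [_ [L1|E1]]];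
        destruct (K b a (circ_S_C X P proj Pmap S iota HP HC uV HV b a Hba)) as [_ [_ [L2|E2]]];
        auto; lra.
Qed.
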